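(* If $F$ is regular, i.e., $r''$ is bounded above on some interval $(1-\delta,1)$ with $\delta\in(0,1)$, then the limit $\lim_{v\to 1^-} r'(v)$ exists in $[-\infty,\infty)$ and lies in $[-\infty,0]$.
   Context: Let $F$ be a probability distribution on $[0,1]$ with support $[0,1]$ admitting a twice continuously differentiable density $f:(0,1)\to\mathbb{R}_{>0}$, and define the inverse hazard rate $r(v)=(1-F(v))/f(v)$ on $(0,1)$. *)

(* Defs.v *)
From Stdlib Require Import Reals.
From Coquelicot Require Import Coquelicot.
Open Scope R_scope.

Definition C2_on_open01 (f : R -> R) : Prop :=
  forall x, 0 < x < 1 ->
    ex_derive f x /\ ex_derive (Derive f) x /\ continuous (Derive (Derive f)) x.

Definition density01 (f : R -> R) : Prop :=
  (forall x, 0 < x < 1 -> 0 < f x) /\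
  C2_on_open01 f /\
  is_RInt_gen f (at_right 0) (at_left 1) 1.

Definition cdf (f : R -> R) (v : R) : R := RInt_gen f (at_right 0) (at_point v).

Definition inv_hazard (f : R -> R) (v : R) : R := (1 - cdf f v) / f v.

Definition regular (f : R -> R) : Prop :=
  exists delta M, 0 < delta < 1 /\
    forall v, 1 - delta < v < 1 -> Derive (Derive (inv_hazard f)) v <= M.

(* Main.v *)
Require Import Defs.
From Stdlib Require Import Reals Lra.
From Coquelicot Require Import Coquelicot.
Open Scope R_scope.

Lemma ballR (x e y : R) : ball x e y <-> Rabs (y - x) < e.
Proof. reflexivity. Qed.

Lemma loc01 v : 0 < v < 1 -> locally v (fun t => 0 < t < 1).
Proof.
  intros Hv. assert (He : 0 < Rmin v (1 - v)) by (apply Rmin_pos; lra).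
  exists (mkposreal _ He). intros y Hy.
  assert (Hy' : Rabs (y - v) < Rmin v (1-v)) by exact Hy.
  assert (H1 := Rmin_l v (1-v)). assert (H2 := Rmin_r v (1-v)).
  destruct (Rabs_def2 _ _ Hy'). lra.
Qed.

Lemma at_left1_pick (P : R -> Prop) : at_left 1 P -> forall a, a < 1 -> exists y, a < y < 1 /\ P y.
Proof.
  intros [d Hd] a Ha. set (m := Rmax a (1 - d)).
  assert (Hm1 := Rmax_l a (1-d)). assert (Hm2 := Rmax_r a (1-d)).
  assert (d > 0) by (destruct d; simpl; lra).
  assert (m < 1) by (unfold m; apply Rmax_lub_lt; lra).
  exists ((m + 1)/2). split. fold m in Hm1, Hm2. lra.
  apply Hd. apply ballR. fold m in Hm1, Hm2. rewrite Rabs_left; lra. lra.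
Qed.

Lemma mono_nondec (g : R -> R) a b :
  (forall x, a < x < b -> ex_derive g x) -> (forall x, a < x < b -> 0 <= Derive g x) ->
  forall x y, a < x -> x <= y -> y < b -> g x <= g y.
Proof.
  intros Hd Hp x y Hx Hxy Hy.
  destruct (Rle_lt_or_eq_dec _ _ Hxy) as [Hlt|<-]; [|lra].
  destruct (MVT_gen g x y (Derive g)) as [c [Hc Heq]].
  - intros z Hz. apply Derive_correct. apply Hd. rewrite Rmin_left in Hz by lra.
    rewrite Rmax_right in Hz by lra. lra.
  - intros z Hz. rewrite Rmin_left in Hz by lra. rewrite Rmax_right in Hz by lra.
    apply continuity_pt_filterlim. apply (@ex_derive_continuous R_AbsRing R_NormedModule). apply Hd. lra.
  - rewrite Rmin_left in Hc by lra. rewrite Rmax_right in Hc by lra.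
    assert (0 <= Derive g c) by (apply Hp; lra).
    assert (0 <= Derive g c * (y - x)) by (apply Rmult_le_pos; lra). lra.
Qed.

From Stdlib Require Import Classical.

Lemma mono_lim (g : R -> R) a : a < 1 ->
  (forall x y, a < x -> x <= y -> y < 1 -> g x <= g y) ->
  exists l, filterlim g (at_left 1) (Rbar_locally l) /\ l <> m_infty.
Proof.
  intros Ha Hm.
  set (E := fun y => exists x, a < x < 1 /\ y = g x).
  destruct (Lub_Rbar_correct E) as [Hub Hlub].
  assert (Hex : forall b : R, Rbar_lt b (Lub_Rbar E) -> exists x, a < x < 1 /\ b < g x).
  { intros b Hb. destruct (classic (exists x, a < x < 1 /\ b < g x)) as [h|h]; [exact h|].
    exfalso. assert (Hu : is_ub_Rbar E b).
    { intros y [x [Hx ->]]. simpl. destruct (Rle_or_lt (g x) b) as [h1|h1]; [exact h1|].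
      exfalso. apply h. exists x. split; assumption. }
    assert (Hl := Hlub _ Hu). apply (Rbar_lt_not_le _ _ Hb Hl). }
  assert (Hin : forall x, a < x < 1 -> Rbar_le (g x) (Lub_Rbar E)).
  { intros x Hx. apply Hub. exists x. split; [exact Hx|reflexivity]. }
  exists (Lub_Rbar E). split.
  - destruct (Lub_Rbar E) as [L| |] eqn:HL.
    + intros P [eps He].
      assert (Hb : Rbar_lt (L - eps) L) by (simpl; destruct eps; simpl; lra).
      destruct (Hex _ Hb) as [x0 [Hx0 Hgx0]].
      assert (Hd : 0 < 1 - x0) by lra.
      exists (mkposreal _ Hd). intros y Hy Hy1.
      change (Rabs (y - 1) < 1 - x0) in Hy. rewrite Rabs_left in Hy by lra.
      apply He. change (Rabs (g y - L) < eps).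
      assert (H1 := Hm x0 y (proj1 Hx0) ltac:(lra) Hy1).
      assert (H2 := Hin y ltac:(lra)). simpl in H2.
      apply Rabs_def1; lra.
    + intros P [M HM].
      assert (Hb : Rbar_lt M p_infty) by (simpl; exact I).
      destruct (Hex _ Hb) as [x0 [Hx0 Hgx0]].
      assert (Hd : 0 < 1 - x0) by lra.
      exists (mkposreal _ Hd). intros y Hy Hy1.
      change (Rabs (y - 1) < 1 - x0) in Hy. rewrite Rabs_left in Hy by lra.
      apply HM.
      assert (H1 := Hm x0 y (proj1 Hx0) ltac:(lra) Hy1). lra.
    + exfalso. assert (H := Hin ((a+1)/2) ltac:(lra)). exact H.
  - intros HL. assert (H := Hin ((a+1)/2) ltac:(lra)). rewrite HL in H. exact H.
Qed.

Lemma deriv_exp_mul (Gf : R -> R) w dG c : c <> 0 -> is_derive Gf w dG ->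
  is_derive (fun t => Gf t * exp (t / c)) w (dG * exp (w / c) + Gf w * (exp (w / c) / c)).
Proof. intros Hc H. auto_derive. exists dG; exact H. replace (Derive (fun x : R => Gf x) w) with dG by (symmetry; apply is_derive_unique; exact H). change (1 * dG * exp (w * / c) + Gf w * (1 * / c * exp (w * / c)) = dG * exp (w / c) + Gf w * (exp (w / c) / c)). unfold Rdiv. ring. Qed.


Section S.
Variable f : R -> R.
Hypothesis fpos : forall x, 0 < x < 1 -> 0 < f x.
Hypothesis fC2 : C2_on_open01 f.
Hypothesis fint : is_RInt_gen f (at_right 0) (at_left 1) 1.

Lemma f_cont x : 0 < x < 1 -> continuous f x.
Proof. intros H. apply (@ex_derive_continuous R_AbsRing R_NormedModule). apply fC2, H. Qed.

Lemma f_exRInt a b : 0 < a < 1 -> 0 < b < 1 -> ex_RInt f a b.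
Proof.
  intros Ha Hb. apply (@ex_RInt_continuous R_CompleteNormedModule). intros z Hz. apply f_cont.
  assert (H1 := Rmin_l a b). assert (H2 := Rmax_l a b).
  assert (H3 := Rmin_r a b). assert (H4 := Rmax_r a b).
  destruct (Rle_dec a b).
  - rewrite Rmin_left in Hz by lra. rewrite Rmax_right in Hz by lra. lra.
  - rewrite Rmin_right in Hz by lra. rewrite Rmax_left in Hz by lra. lra.
Qed.

Lemma joint eps : 0 < eps -> exists al be, 0 < al < 1/2 /\ 1/2 < be < 1 /\
  forall a b, 0 < a < al -> be < b < 1 -> Rabs (RInt f a b - 1) < eps.
Proof.
  intros He.
  assert (H2 : filter_prod (at_right 0) (at_left 1) (fun ab => exists y, is_RInt f (fst ab) (snd ab) y /\ ball 1 (mkposreal _ He) y)).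
  { apply fint. apply (locally_ball (T:=R_UniformSpace) 1 (mkposreal _ He)). }
  destruct H2 as [Q R' HQ HR HQR].
  destruct HQ as [d1 Hd1]. destruct HR as [d2 Hd2].
  assert (Hd1p := cond_pos d1). assert (Hd2p := cond_pos d2).
  exists (Rmin d1 (1/4)), (Rmax (1 - d2) (3/4)).
  assert (H1 := Rmin_l d1 (1/4)). assert (H2' := Rmin_r d1 (1/4)).
  assert (H3 := Rmax_l (1-d2) (3/4)). assert (H4 := Rmax_r (1-d2) (3/4)).
  assert (0 < Rmin d1 (1/4)) by (apply Rmin_pos; lra).
  assert (Rmax (1 - d2) (3/4) < 1) by (apply Rmax_lub_lt; lra).
  split; [lra|]. split; [lra|].
  intros a b Ha Hb.
  assert (HQa : Q a). { apply Hd1; [|lra]. change (Rabs (a - 0) < d1). rewrite Rabs_right; lra. }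
  assert (HRb : R' b). { apply Hd2; [|lra]. change (Rabs (b - 1) < d2). rewrite Rabs_left; lra. }
  destruct (HQR a b HQa HRb) as [y [Hi Hb']].
  simpl in Hi. rewrite (is_RInt_unique _ _ _ _ Hi). exact Hb'.
Qed.

Definition A (a : R) := RInt f a (1/2).

Lemma A_lim : exists A0, filterlim A (at_right 0) (locally A0).
Proof.
  apply filterlim_locally_cauchy. intros eps.
  assert (He : 0 < eps / 2) by (destruct eps; simpl; lra).
  destruct (joint _ He) as [al [be [Hal [Hbe Hj]]]].
  exists (fun a => 0 < a < al). split.
  - exists (mkposreal _ (proj1 Hal)). intros y Hy Hy0. split; [lra|].
    change (Rabs (y - 0) < al) in Hy. rewrite Rabs_right in Hy; lra.
  - intros u v Hu Hv. change (Rabs (A v - A u) < eps).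
    set (b := (be + 1) / 2).
    assert (Hb : be < b < 1) by (unfold b; lra).
    assert (E1 : RInt f u b = RInt f u v + RInt f v b).
    { symmetry. apply (RInt_Chasles f u v b); apply f_exRInt; lra. }
    assert (E2 : A u = RInt f u v + A v).
    { unfold A. symmetry. apply (RInt_Chasles f u v (1/2)); apply f_exRInt; lra. }
    assert (J1 := Hj u b Hu Hb). assert (J2 := Hj v b Hv Hb).
    destruct (Rabs_def2 _ _ J1). destruct (Rabs_def2 _ _ J2).
    apply Rabs_def1; lra.
Qed.

Section S2.
Variable A0 : R.
Hypothesis HA0 : filterlim A (at_right 0) (locally A0).

Lemma cdf_eq v : 0 < v < 1 -> cdf f v = A0 + RInt f (1/2) v.
Proof.
  intros Hv. unfold cdf. apply is_RInt_gen_unique.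
  intros P [eps Heps].
  assert (HA : at_right 0 (fun a => ball A0 eps (A a))).
  { apply HA0. apply (locally_ball (T:=R_UniformSpace)). }
  destruct HA as [d Hd].
  assert (Hdp := cond_pos d).
  apply (Filter_prod _ _ _ (fun a => 0 < a < Rmin d (1/2)) (fun b => b = v)).
  - assert (Hm : 0 < Rmin d (1/2)) by (apply Rmin_pos; lra).
    exists (mkposreal _ Hm). intros y Hy Hy0. split; [lra|].
    change (Rabs (y - 0) < Rmin d (1/2)) in Hy. rewrite Rabs_right in Hy; lra.
  - reflexivity.
  - intros a b Ha ->. exists (RInt f a v). split.
    + simpl. apply (@RInt_correct R_CompleteNormedModule). apply f_exRInt; try lra.
      assert (H1 := Rmin_r d (1/2)). lra.
    + apply Heps.
      assert (H1 := Rmin_r d (1/2)). assert (H2 := Rmin_l d (1/2)).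
      assert (Hb : ball A0 eps (A a)).
      { apply Hd; [|lra]. change (Rabs (a - 0) < d). rewrite Rabs_right; lra. }
      change (Rabs (A a - A0) < eps) in Hb.
      change (Rabs (RInt f a v - (A0 + RInt f (1/2) v)) < eps).
      assert (E : RInt f a v = A a + RInt f (1/2) v).
      { unfold A. symmetry. apply (RInt_Chasles f a (1/2) v); apply f_exRInt; lra. }
      rewrite E. replace (A a + RInt f (1 / 2) v - (A0 + RInt f (1 / 2) v)) with (A a - A0) by ring.
      exact Hb.
Qed.

Definition G (v : R) := 1 - A0 - RInt f (1/2) v.

Lemma G_lim : filterlim G (at_left 1) (locally 0).
Proof.
  intros P [eps Heps].
  assert (He : 0 < eps / 2) by (destruct eps; simpl; lra).
  destruct (joint _ He) as [al [be [Hal [Hbe Hj]]]].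
  assert (HA : at_right 0 (fun a => ball A0 (mkposreal _ He) (A a))).
  { apply HA0. apply (locally_ball (T:=R_UniformSpace)). }
  destruct HA as [d Hd]. assert (Hdp := cond_pos d).
  set (a := Rmin d al / 2).
  assert (H1 := Rmin_l d al). assert (H2 := Rmin_r d al).
  assert (0 < Rmin d al) by (apply Rmin_pos; lra).
  assert (Ha : 0 < a < al) by (unfold a; lra).
  assert (Hb : ball A0 (mkposreal _ He) (A a)).
  { apply Hd; [|lra]. change (Rabs (a - 0) < d). rewrite Rabs_right; unfold a; lra. }
  change (Rabs (A a - A0) < eps/2) in Hb.
  assert (Hbe1 : 0 < 1 - be) by lra.
  exists (mkposreal _ Hbe1). intros y Hy Hy1.
  change (Rabs (y - 1) < 1 - be) in Hy. rewrite Rabs_left in Hy by lra.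
  apply Heps. change (Rabs (G y - 0) < eps).
  assert (E : RInt f a y = A a + RInt f (1/2) y).
  { unfold A. symmetry. apply (RInt_Chasles f a (1/2) y); apply f_exRInt; lra. }
  assert (J := Hj a y Ha (conj (ltac:(lra) : be < y) Hy1)).
  unfold G. destruct (Rabs_def2 _ _ J). destruct (Rabs_def2 _ _ Hb).
  apply Rabs_def1; lra.
Qed.

Lemma G_deriv v : 0 < v < 1 -> is_derive G v (- f v).
Proof.
  intros Hv.
  assert (HI : is_derive (RInt f (1/2)) v (f v)).
  { apply (is_derive_RInt (V:=R_NormedModule) f (RInt f (1/2)) (1/2) v).
    - apply (filter_imp (fun t => 0 < t < 1)); [|apply loc01, Hv].
      intros t Ht. apply (@RInt_correct R_CompleteNormedModule). apply f_exRInt; lra.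
    - apply f_cont, Hv. }
  unfold G.
  assert (Hc : is_derive (fun _ : R => 1 - A0) v 0) by (auto_derive; [exact I|ring]).
  assert (H := is_derive_minus _ _ _ _ _ Hc HI).
  replace (- f v) with (minus 0 (f v)). exact H.
  unfold minus, plus, opp; simpl. ring.
Qed.

Lemma G_decr v w : 0 < v -> v < w -> w < 1 -> G w < G v.
Proof.
  intros Hv Hvw Hw.
  assert (H := incr_function (fun x => - G x) 0 1 f).
  assert (- G v < - G w); [|lra].
  apply H; simpl; try lra.
  - intros x H0 H1. replace (f x) with (- - f x) by ring.
    apply (is_derive_opp G x (- f x)). apply G_deriv. lra.
  - intros x H0 H1. apply fpos. lra.
Qed.

Lemma G_pos v : 0 < v < 1 -> 0 < G v.
Proof.
  intros Hv. destruct (Rlt_or_le 0 (G v)) as [h|h]; [exact h|exfalso].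
  set (w := (v + 1) / 2).
  assert (Hw : G w < G v) by (apply G_decr; unfold w; lra).
  assert (Hp : 0 < - G w) by lra.
  assert (Hl : at_left 1 (fun y => ball 0 (mkposreal _ Hp) (G y))).
  { apply G_lim. apply (locally_ball (T:=R_UniformSpace)). }
  destruct (at_left1_pick _ Hl w) as [y [Hy Hb]]. unfold w; lra.
  change (Rabs (G y - 0) < - G w) in Hb.
  assert (G y < G w) by (apply G_decr; unfold w in *; lra).
  destruct (Rabs_def2 _ _ Hb). lra.
Qed.


Definition r1 (w : R) := -1 - G w * Derive f w / (f w * f w).

Lemma r_eq w : 0 < w < 1 -> inv_hazard f w = G w / f w.
Proof. intros Hw. unfold inv_hazard, G. rewrite cdf_eq by exact Hw. f_equal. ring. Qed.

Lemma r_deriv0 v : 0 < v < 1 -> is_derive (fun w => G w / f w) v (r1 v).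
Proof.
  intros Hv. assert (Hf := fpos v Hv).
  assert (H := is_derive_div _ _ _ _ _ (G_deriv v Hv) (Derive_correct _ _ (proj1 (fC2 v Hv))) ltac:(lra)).
  replace (r1 v) with ((- f v * f v - G v * Derive f v) / f v ^ 2). exact H.
  unfold r1. field. lra.
Qed.

Lemma r_deriv v : 0 < v < 1 -> is_derive (inv_hazard f) v (r1 v).
Proof.
  intros Hv. apply (is_derive_ext_loc (fun w => G w / f w)).
  - apply (filter_imp (fun t => 0 < t < 1)); [|apply loc01, Hv].
    intros t Ht. symmetry. apply r_eq, Ht.
  - apply r_deriv0, Hv.
Qed.

Lemma Dr_eq w : 0 < w < 1 -> Derive (inv_hazard f) w = r1 w.
Proof. intros Hw. apply is_derive_unique, r_deriv, Hw. Qed.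

Lemma r1_ex v : 0 < v < 1 -> ex_derive r1 v.
Proof.
  intros Hv. assert (Hf := fpos v Hv). unfold r1. auto_derive.
  repeat split.
  - exists (- f v). apply G_deriv, Hv.
  - apply fC2, Hv.
  - apply fC2, Hv.
  - apply fC2, Hv.
  - nra.
Qed.

Lemma DDr_eq v : 0 < v < 1 -> Derive (Derive (inv_hazard f)) v = Derive r1 v.
Proof.
  intros Hv. apply Derive_ext_loc.
  apply (filter_imp (fun t => 0 < t < 1)); [|apply loc01, Hv].
  intros t Ht. apply Dr_eq, Ht.
Qed.

Section S3.
Variables delta M : R.
Hypothesis Hdelta : 0 < delta < 1.
Hypothesis HM : forall v, 1 - delta < v < 1 -> Derive (Derive (inv_hazard f)) v <= M.

Definition g (w : R) := M * w - r1 w.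

Lemma g_mono x y : 1 - delta < x -> x <= y -> y < 1 -> g x <= g y.
Proof.
  assert (Hd : forall z, 1 - delta < z < 1 -> is_derive g z (M - Derive r1 z)).
  { intros z Hz.
    assert (H1 : is_derive (fun w => M * w) z M) by (auto_derive; [exact I|ring]).
    assert (H2 : is_derive r1 z (Derive r1 z)) by (apply Derive_correct, r1_ex; lra).
    exact (is_derive_minus _ _ _ _ _ H1 H2). }
  revert x y. apply (mono_nondec g (1 - delta) 1).
  - intros z Hz. exists (M - Derive r1 z). apply Hd, Hz.
  - intros z Hz. rewrite (is_derive_unique _ _ _ (Hd z Hz)).
    rewrite <- DDr_eq by lra. assert (H := HM z Hz). lra.
Qed.

Lemma main_S3 : exists l : Rbar,
    filterlim (Derive (inv_hazard f)) (at_left 1) (Rbar_locally l) /\ Rbar_le l (Finite 0).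
Proof.
  destruct (mono_lim g (1 - delta) ltac:(lra) g_mono) as [l [Hl Hlm]].
  set (l' := Rbar_plus (Finite M) (Rbar_opp l)).
  assert (Hlim : filterlim r1 (at_left 1) (Rbar_locally l')).
  { apply (filterlim_ext_loc (fun w => M * w + - g w)).
    { exists (mkposreal _ Rlt_0_1). intros y _ _. unfold g. ring. }
    apply (filterlim_comp_2 (G:=Rbar_locally (Finite M)) (H:=Rbar_locally (Rbar_opp l)) (fun w => M * w) (fun w => - g w) Rplus).
    - intros P [eps He].
      assert (Hp : 0 < eps / (Rabs M + 1)).
      { apply Rdiv_lt_0_compat. destruct eps; simpl; lra. assert (H := Rabs_pos M). lra. }
      exists (mkposreal _ Hp). intros y Hy Hy1. apply He.
      change (Rabs (y - 1) < eps / (Rabs M + 1)) in Hy.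
      change (Rabs (M * y - M) < eps).
      replace (M * y - M) with (M * (y - 1)) by ring. rewrite Rabs_mult.
      assert (H0 := Rabs_pos M). assert (H1 := Rabs_pos (y - 1)).
      assert (Hy' : Rabs (y - 1) * (Rabs M + 1) < eps).
      { apply (Rmult_lt_compat_r (Rabs M + 1)) in Hy; [|lra].
        unfold Rdiv in Hy. rewrite Rmult_assoc, Rinv_l, Rmult_1_r in Hy; lra. }
      nra.
    - apply (filterlim_comp _ _ _ g Ropp _ (Rbar_locally l)). exact Hl. apply filterlim_Rbar_opp.
    - apply filterlim_Rbar_plus. apply Rbar_plus_correct.
      destruct l; simpl; auto. }
  exists l'. split.
  - apply (filterlim_ext_loc r1).
    + exists (mkposreal _ Rlt_0_1). intros y Hy Hy1.
      change (Rabs (y - 1) < 1) in Hy. rewrite Rabs_left in Hy by lra.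
      symmetry. apply Dr_eq. lra.
    + exact Hlim.
  - destruct (Rbar_le_lt_dec l' 0) as [h|h]; [exact h|exfalso].
    assert (Ho := open_Rbar_gt' _ _ h).
    assert (Hev : at_left 1 (fun u => Rbar_lt 0 (r1 u))) by exact (Hlim _ Ho).
    destruct Hev as [d Hd]. assert (Hdp := cond_pos d).
    assert (Ha1 := Rmax_l (1 - d) 0). assert (Ha2 := Rmax_r (1 - d) 0).
    set (a0 := Rmax (1 - d) 0) in *.
    assert (Ha3 : a0 < 1) by (apply Rmax_lub_lt; lra).
    assert (Hr1 : forall y, a0 < y < 1 -> 0 < r1 y).
    { intros y Hy. apply (Hd y); [|lra]. change (Rabs (y - 1) < d). rewrite Rabs_left; lra. }
    assert (Hrm : forall x y, a0 < x -> x <= y -> y < 1 -> G x / f x <= G y / f y).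
    { apply mono_nondec.
      - intros z Hz. exists (r1 z). apply r_deriv0. lra.
      - intros z Hz. replace (Derive _ z) with (r1 z) by (symmetry; apply is_derive_unique, r_deriv0; lra).
        apply Rlt_le, Hr1, Hz. }
    set (v1 := (a0 + 1) / 2).
    assert (Hv1 : a0 < v1 < 1) by (unfold v1; lra).
    set (c := G v1 / f v1).
    assert (Hcp : 0 < c).
    { apply Rdiv_lt_0_compat. apply G_pos; lra. apply fpos; lra. }
    assert (Hc : forall y, v1 <= y < 1 -> c <= G y / f y).
    { intros y Hy. apply Hrm; lra. }
    set (H := fun t => G t * exp (t / c)).
    assert (HdH : forall w, 0 < w < 1 -> is_derive H w (- f w * exp (w / c) + G w * (exp (w / c) / c))).
    { intros w Hw. apply deriv_exp_mul. lra. apply G_deriv, Hw. }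
    assert (Hm : forall x y, v1 < x -> x <= y -> y < 1 -> H x <= H y).
    { apply mono_nondec.
      - intros z Hz. eexists. apply HdH. lra.
      - intros z Hz. replace (Derive _ z) with (- f z * exp (z / c) + G z * (exp (z / c) / c)) by (symmetry; apply is_derive_unique, HdH; lra).
        assert (Hfz := fpos z ltac:(lra)).
        assert (Hcz := Hc z ltac:(lra)).
        assert (HG : c * f z <= G z).
        { apply (Rmult_le_compat_r (f z)) in Hcz; [|lra].
          unfold Rdiv in Hcz. rewrite Rmult_assoc, Rinv_l, Rmult_1_r in Hcz; lra. }
        assert (He := exp_pos (z / c)).
        replace (- f z * exp (z / c) + G z * (exp (z / c) / c)) with (exp (z / c) / c * (G z - c * f z)) by (field; lra).
        apply Rmult_le_pos; [|lra]. apply Rlt_le, Rdiv_lt_0_compat; lra. }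
    set (v2 := (v1 + 1) / 2).
    assert (Hv2 : v1 < v2 < 1) by (unfold v2; lra).
    assert (Hh0 : 0 < H v2).
    { unfold H. apply Rmult_lt_0_compat. apply G_pos; lra. apply exp_pos. }
    assert (Heps : 0 < H v2 / exp (1 / c)) by (apply Rdiv_lt_0_compat; [lra|apply exp_pos]).
    assert (Hl2 : at_left 1 (fun y => ball 0 (mkposreal _ Heps) (G y))).
    { apply G_lim. apply (locally_ball (T:=R_UniformSpace)). }
    destruct (at_left1_pick _ Hl2 v2 ltac:(lra)) as [y [Hy Hb]].
    change (Rabs (G y - 0) < H v2 / exp (1 / c)) in Hb.
    assert (HGy : 0 < G y) by (apply G_pos; lra).
    rewrite Rminus_0_r, Rabs_right in Hb by lra.
    assert (Hmy := Hm v2 y ltac:(lra) ltac:(lra) ltac:(lra)). unfold H in Hmy.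
    assert (Hexp : exp (y / c) <= exp (1 / c)).
    { apply Rlt_le, exp_increasing. unfold Rdiv. apply Rmult_lt_compat_r; [apply Rinv_0_lt_compat|]; lra. }
    assert (He1 := exp_pos (1 / c)).
    apply (Rmult_lt_compat_r (exp (1 / c))) in Hb; [|lra].
    unfold Rdiv at 2 in Hb. rewrite Rmult_assoc, Rinv_l, Rmult_1_r in Hb by lra.
    assert (G y * exp (y / c) <= G y * exp (1 / c)) by (apply Rmult_le_compat_l; lra).
    unfold H in *. lra.
Qed.
End S3.
End S2.
End S.

Theorem lemma6 (f : R -> R) :
  density01 f -> regular f ->
  exists l : Rbar,
    filterlim (Derive (inv_hazard f)) (at_left 1) (Rbar_locally l) /\
    Rbar_le l (Finite 0).
Proof.
  intros [fpos [fC2 fint]] [delta [M [Hdelta HM]]].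
  destruct (A_lim f fC2 fint) as [A0 HA0].
  eapply main_S3; eauto.
Qed.
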